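(* Let $f : \{0, 1\}^n \to \{0, 1\}$ be a Boolean function. Then $\lceil\log(\mathsf{NAADT}(f))\rceil \leq \mathsf{D}_{\mathrm{cc}}^\rightarrow(f \circ \mathsf{AND}) \leq \mathsf{NAADT}(f)$.
   Context: $\mathsf{AND}_S(x)=\prod_{i\in S}x_i$ for $S\subseteq[n]$. $\mathsf{NAADT}(f)$ is the minimum $k$ for which there exist $S_1,\dots,S_k\subseteq[n]$ such that $f(x)$ is determined by $\mathsf{AND}_{S_1}(x),\dots,\mathsf{AND}_{S_k}(x)$ for all $x$. $f\circ\mathsf{AND}$ is the two-party function $(x,y)\mapsto f(x_1\wedge y_1,\dots,x_n\wedge y_n)$ (Alice holds $x$, Bob $y$); $\mathsf{D}_{\mathrm{cc}}^\rightarrow$ is deterministic one-way communication complexity. Logarithms are base 2. *)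

(* Defs.v *)
From mathcomp Require Import all_boot all_order.
Set Implicit Arguments. Unset Strict Implicit. Unset Printing Implicit Defensive.

Notation bvec n := {ffun 'I_n -> bool}.

Definition AND_S n (S : {set 'I_n}) (x : bvec n) : bool := [forall i in S, x i].

Definition naadt_ok n (f : bvec n -> bool) (k : nat) : bool :=
  [exists Ss : {ffun 'I_k -> {set 'I_n}}, exists g : {ffun bvec k -> bool},
    forall x : bvec n, f x == g [ffun j => AND_S (Ss j) x]].

Lemma naadt_ok_n n (f : bvec n -> bool) : naadt_ok f n.
Proof.
apply/existsP; exists [ffun j => [set j]]; apply/existsP; exists [ffun v => f v].
apply/forallP => x; rewrite ffunE; apply/eqP; congr f; apply/ffunP => j.
rewrite !ffunE.
rewrite /AND_S; apply/esym; case: (boolP (x j)) => xj.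
- by apply/forall_inP => i; rewrite inE => /eqP ->.
- by apply/negbTE/forall_inPn; exists j; rewrite ?inE ?eqxx.
Qed.

Lemma naadt_ex n (f : bvec n -> bool) : exists k, naadt_ok f k.
Proof. by exists n; apply: naadt_ok_n. Qed.

Definition NAADT n (f : bvec n -> bool) : nat := ex_minn (naadt_ex f).

Definition compAND n (f : bvec n -> bool) (x y : bvec n) : bool :=
  f [ffun i => x i && y i].

(* deterministic one-way protocol of cost c: Alice sends a c-bit message
   m(x), Bob outputs b(m(x), y). *)
Definition oneway_ok n (F : bvec n -> bvec n -> bool) (c : nat) : bool :=
  [exists m : {ffun bvec n -> bvec c}, exists b : {ffun bvec c -> {ffun bvec n -> bool}},
    forall x, forall y, F x y == b (m x) y].

Lemma oneway_ex n (F : bvec n -> bvec n -> bool) : exists c, oneway_ok F c.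
Proof.
exists n; apply/existsP; exists [ffun x => x]; apply/existsP.
exists [ffun x => [ffun y => F x y]].
by apply/forallP => x; apply/forallP => y; rewrite !ffunE.
Qed.

Definition Dcc_oneway n (F : bvec n -> bvec n -> bool) : nat :=
  ex_minn (oneway_ex F).

(* ceil(log2 k), with the convention ceil(log2 0) = 0 *)
Definition ceil_log2 (k : nat) : nat := up_log 2 k.

(* Main.v *)
Require Import Defs.
From mathcomp Require Import all_boot all_order.
Set Implicit Arguments. Unset Strict Implicit. Unset Printing Implicit Defensive.

Definition meet n (a b : bvec n) : bvec n := [ffun i => a i && b i].
Definition sameR n (f : bvec n -> bool) (a b : bvec n) :=
  forall y, f (meet a y) = f (meet b y).

Lemma meetA n (a b c : bvec n) : meet a (meet b c) = meet (meet a b) c.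
Proof. by apply/ffunP => i; rewrite !ffunE andbA. Qed.
Lemma meetC n (a b : bvec n) : meet a b = meet b a.
Proof. by apply/ffunP => i; rewrite !ffunE andbC. Qed.
Lemma meetK n (a b : bvec n) : meet a (meet a b) = meet a b.
Proof. by apply/ffunP => i; rewrite !ffunE andbA andbb. Qed.
Lemma meetxx n (a : bvec n) : meet a a = a.
Proof. by apply/ffunP => i; rewrite !ffunE andbb. Qed.

Lemma sameL n (f : bvec n -> bool) a b : sameR f a b -> sameR f (meet a b) a.
Proof.
move=> H y; rewrite -meetA H meetK; exact: (esym (H y)).
Qed.

Definition mset n (s : seq (bvec n)) : bvec n := [ffun i => all (fun x : bvec n => x i) s].

Lemma mset_cons n (x : bvec n) s : mset (x :: s) = meet x (mset s).
Proof. by apply/ffunP => i; rewrite !ffunE. Qed.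

Lemma msetR n (f : bvec n -> bool) s x0 :
  (forall x, x \in s -> sameR f x x0) -> sameR f (meet x0 (mset s)) x0.
Proof.
elim: s => [|x s IH] Hs.
  have -> : meet x0 (mset [::]) = x0 by apply/ffunP => i; rewrite !ffunE andbT.
  by [].
rewrite mset_cons meetA (meetC x0 x) -meetA.
have H1 : sameR f (meet x0 (mset s)) x0.
  by apply: IH => z zs; apply: Hs; rewrite inE zs orbT.
have Hx : sameR f x x0 by apply: Hs; rewrite inE eqxx.
have H2 : sameR f x (meet x0 (mset s)) by move=> y; rewrite Hx H1.
move=> y; rewrite (sameL H2 y); exact: Hx.
Qed.

Lemma mset_in n (f : bvec n -> bool) s x0 :
  x0 \in s -> (forall x, x \in s -> sameR f x x0) -> sameR f (mset s) x0.
Proof.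
move=> x0s Hs.
have -> : mset s = meet x0 (mset s).
  apply/ffunP => i; rewrite !ffunE.
  case E: (all _ s); last by rewrite andbF.
  by rewrite (allP E x0 x0s).
exact: msetR.
Qed.

Lemma AND_meet n (S : {set 'I_n}) x y :
  AND_S S (meet x y) = AND_S S x && AND_S S y.
Proof.
apply/forall_inP/andP => [H|[/forall_inP Hx /forall_inP Hy] i iS].
  by split; apply/forall_inP => i iS; have := H i iS; rewrite ffunE => /andP[].
by rewrite ffunE Hx ?Hy.
Qed.

Lemma upper n (f : bvec n -> bool) k : naadt_ok f k -> oneway_ok (compAND f) k.
Proof.
case/existsP => Ss /existsP [g /forallP Hg].
apply/existsP; exists [ffun x => [ffun j => AND_S (Ss j) x]].
apply/existsP; exists [ffun v : bvec k => [ffun y => g [ffun j => v j && AND_S (Ss j) y]]].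
apply/forallP => x; apply/forallP => y; rewrite !ffunE.
rewrite /compAND (eqP (Hg [ffun i => x i && y i])); apply/eqP; apply: (congr1 (fun v => g v)).
apply/ffunP => j; rewrite !ffunE; exact: (AND_meet (Ss j) x y).
Qed.

Lemma lower n (f : bvec n -> bool) c : oneway_ok (compAND f) c -> naadt_ok f #|bvec c|.
Proof.
case/existsP => mess /existsP [bb /forallP H].
have HR : forall x y, f (meet x y) = bb (mess x) y.
  by move=> x y; exact: (eqP (forallP (H x) y)).
pose mm (mu : bvec c) := mset (enum [pred x : bvec n | mess x == mu]).
have F1 : forall z, sameR f (mm (mess z)) z.
  move=> z; apply: mset_in; first by rewrite mem_enum inE eqxx.
  by move=> x; rewrite mem_enum inE => /eqP E y; rewrite !HR E.
have F2 : forall z i, mm (mess z) i -> z i.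
  move=> z i; rewrite /mm ffunE => /allP; apply.
  by rewrite mem_enum inE eqxx.
pose Ss := [ffun j : 'I_#|bvec c| => [set i | mm (enum_val j) i]].
pose vec (z : bvec n) : bvec #|bvec c| := [ffun j => AND_S (Ss j) z].
have Key : forall z z', vec z = vec z' -> f z = f z'.
  have half : forall z z', vec z = vec z' -> f z = f (meet z z').
    move=> z z' E.
    pose j : 'I_#|bvec c| := enum_rank (mess z).
    have A : AND_S (Ss j) z.
      apply/forall_inP => i; rewrite ffunE inE enum_rankK; exact: F2.
    have A' : AND_S (Ss j) z'.
      have Hv : forall w, vec w j = AND_S (Ss j) w by move=> w; rewrite /vec ffunE.
      by rewrite -Hv -E Hv.
    have le : forall w, AND_S (Ss j) w -> meet (mm (mess z)) w = mm (mess z).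
      move=> w /forall_inP Hw; apply/ffunP => i; rewrite ffunE.
      case E2: (mm (mess z) i) => //=; apply: Hw; by rewrite ffunE inE enum_rankK.
    rewrite -{1}(meetxx z) -(F1 z z) (le z A) -{1}(le z' A') (F1 z z') //.
  move=> z z' E; rewrite (half z z' E) meetC -(half z' z (esym E)) //.
apply/existsP; exists Ss.
apply/existsP; exists [ffun v => if [pick z | vec z == v] is Some z then f z else false].
apply/forallP => x; rewrite ffunE.
case: pickP => [z /eqP Ez|]; last by move/(_ x); rewrite eqxx.
by rewrite (Key x z) ?Ez.
Qed.

Theorem claim4p3 (n : nat) (f : {ffun 'I_n -> bool} -> bool) :
  ceil_log2 (NAADT f) <= Dcc_oneway (compAND f) <= NAADT f.
Proof.
apply/andP; split.
  rewrite /Dcc_oneway; case: ex_minnP => c Hc _.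
  rewrite /ceil_log2 /NAADT; case: ex_minnP => k _ Hmin.
  apply: up_log_min => //; apply: leq_trans (Hmin _ (lower Hc)) _.
  by rewrite card_ffun card_bool card_ord.
rewrite /NAADT; case: ex_minnP => k Hk _.
rewrite /Dcc_oneway; case: ex_minnP => c _ Hmin.
exact: Hmin _ (upper Hk).
Qed.
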